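(* Let $\kappa\in\mathbb{K}$, let $(\mathfrak{g},[-,-,-]_\mathfrak{g},\alpha_\mathfrak{g})$ and $(\mathfrak{h},[-,-,-]_\mathfrak{h},\alpha_\mathfrak{h})$ be regular Hom-Lie triple systems (i.e. $\alpha_\mathfrak{g},\alpha_\mathfrak{h}$ are bijective), $\theta$ an action of $\mathfrak{g}$ on $\mathfrak{h}$, and $\mathcal{A}:\mathfrak{h}\to\mathfrak{g}$ a $\kappa$-weighted $\mathcal{O}$-operator with respect to $\theta$. Let $a,b\in\mathfrak{g}$ satisfy $\alpha_\mathfrak{g}(a)=a$, $\alpha_\mathfrak{g}(b)=b$, and define $\Im(a,b):\mathfrak{h}\to\mathfrak{g}$ by $$\Im(a,b)v=\mathcal{A}\big(D(a,b)\alpha_\mathfrak{h}^{-1}(v)\big)-[a,b,\mathcal{A}\alpha_\mathfrak{h}^{-1}(v)]_\mathfrak{g}.$$ Then $\Im(a,b)$ is a 1-cocycle of the Hom-Lie triple system $(\mathfrak{h},\{-,-,-\}_\mathcal{A},\alpha_\mathfrak{h})$ with coefficients in $(\mathfrak{g},\alpha_\mathfrak{g};\theta_\mathcal{A})$; that is, $\alpha_\mathfrak{g}\circ\Im(a,b)=\Im(a,b)\circ\alpha_\mathfrak{h}$ and for all $v_1,v_2,v_3\in\mathfrak{h}$, $$\theta_\mathcal{A}(v_2,v_3)\Im(a,b)v_1-\theta_\mathcal{A}(v_1,v_3)\Im(a,b)v_2+D_\mathcal{A}(v_1,v_2)\Im(a,b)v_3-\Im(a,b)\{v_1,v_2,v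_3\}_\mathcal{A}=0.$$
   Context: All vector spaces are over a field $\mathbb{K}$ of characteristic zero. A Hom-Lie triple system $(\mathfrak{g},[-,-,-]_\mathfrak{g},\alpha_\mathfrak{g})$ is a vector space with a trilinear map $[-,-,-]_\mathfrak{g}$ and a linear map $\alpha_\mathfrak{g}$ with $\alpha_\mathfrak{g}([x,y,z]_\mathfrak{g})=[\alpha_\mathfrak{g}(x),\alpha_\mathfrak{g}(y),\alpha_\mathfrak{g}(z)]_\mathfrak{g}$ such that for all $x,y,z,a,b$: $[x,y,z]_\mathfrak{g}+[y,x,z]_\mathfrak{g}=0$; $[x,y,z]_\mathfrak{g}+[z,x,y]_\mathfrak{g}+[y,z,x]_\mathfrak{g}=0$; $[\alpha_\mathfrak{g}(a),\alpha_\mathfrak{g}(b),[x,y,z]_\mathfrak{g}]_\mathfrak{g}=[[a,b,x]_\mathfrak{g},\alpha_\mathfrak{g}(y),\alpha_\mathfrak{g}(z)]_\mathfrak{g}+[\alpha_\mathfrak{g}(x),[a,b,y]_\mathfrak{g},\alpha_\mathfrak{g}(z)]_\mathfrak{g}+[\alpha_\mathfrak{g}(x),\alpha_\mathfrak{g}(y),[a,b,z]_\mathfrak{g}]_\mathfrak{g}$. A representation of $\mathfrak{g}$ on $(V,\beta)$ is a bilinear map $\theta:\mathfrak{g}\times\mathfrak{g}\to\mathrm{End}(V)$ such that, with $D(x,y)=\theta(y,x)-\theta(x,y)$, for all $x,y,a,b$: $\theta(\alpha_\mathfrak{g}(x),\alpha_\mathfrak{g}(y))\circ\beta=\beta\circ\theta(x,y)$;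 $\theta(\alpha_\mathfrak{g}(a),\alpha_\mathfrak{g}(b))\theta(x,y)-\theta(\alpha_\mathfrak{g}(y),\alpha_\mathfrak{g}(b))\theta(x,a)-\theta(\alpha_\mathfrak{g}(x),[y,a,b]_\mathfrak{g})\circ\beta+D(\alpha_\mathfrak{g}(y),\alpha_\mathfrak{g}(a))\theta(x,b)=0$; $\theta(\alpha_\mathfrak{g}(a),\alpha_\mathfrak{g}(b))D(x,y)-D(\alpha_\mathfrak{g}(x),\alpha_\mathfrak{g}(y))\theta(a,b)+\theta([x,y,a]_\mathfrak{g},\alpha_\mathfrak{g}(b))\circ\beta+\theta(\alpha_\mathfrak{g}(a),[x,y,b]_\mathfrak{g})\circ\beta=0$. An action of $\mathfrak{g}$ on a Hom-Lie triple system $(\mathfrak{h},[-,-,-]_\mathfrak{h},\alpha_\mathfrak{h})$ is a representation $\theta$ of $\mathfrak{g}$ on $(\mathfrak{h},\alpha_\mathfrak{h})$ such that for all $x,y\in\mathfrak{g}$, $u,v,w\in\mathfrak{h}$: $\theta(\alpha_\mathfrak{g}(x),\alpha_\mathfrak{g}(y))[u,v,w]_\mathfrak{h}=[\theta(x,y)u,\alpha_\mathfrak{h}(v),\alpha_\mathfrak{h}(w)]_\mathfrak{h}+[\alpha_\mathfrak{h}(u),\theta(x,y)v,\alpha_\mathfrak{h}(w)]_\mathfrak{h}+[\alpha_\mathfrak{h}(u),\alpha_\mathfrak{h}(v),\theta(x,y)w]_\mathfrak{h}$ and $\theta(\alpha_\mathfrak{g}(x),\alpha_\mathfrak{g}(y))[u,v,w]_\mathfrak{h}=[\alpha_\mathfrak{h}(u),\alpha_\mathfrak{h}(v),\theta(x,y)w]_\mathfrak{h}=0$.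 A $\kappa$-weighted $\mathcal{O}$-operator from $\mathfrak{h}$ to $\mathfrak{g}$ with respect to $\theta$ is a linear map $\mathcal{A}:\mathfrak{h}\to\mathfrak{g}$ with $\mathcal{A}\circ\alpha_\mathfrak{h}=\alpha_\mathfrak{g}\circ\mathcal{A}$ and $[\mathcal{A}u,\mathcal{A}v,\mathcal{A}w]_\mathfrak{g}=\mathcal{A}\big(D(\mathcal{A}u,\mathcal{A}v)w-\theta(\mathcal{A}u,\mathcal{A}w)v+\theta(\mathcal{A}v,\mathcal{A}w)u+\kappa[u,v,w]_\mathfrak{h}\big)$. For such $\mathcal{A}$: $\{u,v,w\}_\mathcal{A}=D(\mathcal{A}u,\mathcal{A}v)w-\theta(\mathcal{A}u,\mathcal{A}w)v+\theta(\mathcal{A}v,\mathcal{A}w)u+\kappa[u,v,w]_\mathfrak{h}$ makes $(\mathfrak{h},\{-,-,-\}_\mathcal{A},\alpha_\mathfrak{h})$ a Hom-Lie triple system; $\theta_\mathcal{A}(u,v)(x)=[x,\mathcal{A}u,\mathcal{A}v]_\mathfrak{g}+\mathcal{A}(\theta(x,\mathcal{A}v)u-D(x,\mathcal{A}u)v)$ for $u,v\in\mathfrak{h}$, $x\in\mathfrak{g}$ defines a representation of it on $(\mathfrak{g},\alpha_\mathfrak{g})$, and $D_\mathcal{A}(u,v)=\theta_\mathcal{A}(v,u)-\theta_\mathcal{A}(u,v)$. *)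

(* Defs.v *)
From HB Require Import structures.
From mathcomp Require Import all_boot all_order all_algebra.
Set Implicit Arguments. Unset Strict Implicit. Unset Printing Implicit Defensive.
Import GRing.Theory.
Local Open Scope ring_scope.

Section HomLTS.
Variable K : fieldType.

Definition lin (U V : lmodType K) (f : U -> V) : Prop :=
  forall (c : K) (u v : U), f (c *: u + v) = c *: f u + f v.

Definition trilinear (V : lmodType K) (br : V -> V -> V -> V) : Prop :=
  (forall y z, lin (fun x => br x y z)) /\
  (forall x z, lin (fun y => br x y z)) /\
  (forall x y, lin (fun z => br x y z)).

Definition HomLTS (V : lmodType K) (br : V -> V -> V -> V) (al : V -> V) : Prop :=
  trilinear br /\ lin al /\
      (forall x y z, al (br x y z) = br (al x) (al y) (al z)) /\
      (forall x y z, br x y z + br y x z = 0) /\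
      (forall x y z, br x y z + br z x y + br y z x = 0) /\
      (forall a b x y z,
          br (al a) (al b) (br x y z) =
          br (br a b x) (al y) (al z) + br (al x) (br a b y) (al z)
          + br (al x) (al y) (br a b z)).

Definition Dop (G V : lmodType K) (th : G -> G -> V -> V) (x y : G) : V -> V :=
  fun v => th y x v - th x y v.

Definition HomLTS_rep (G V : lmodType K) (brg : G -> G -> G -> G) (alg : G -> G)
    (beta : V -> V) (th : G -> G -> V -> V) : Prop :=
  (forall x y, lin (th x y)) /\
      (forall y v, lin (fun x => th x y v)) /\
      (forall x v, lin (fun y => th x y v)) /\
      (forall x y v, th (alg x) (alg y) (beta v) = beta (th x y v)) /\
      (forall a b x y v,
          th (alg a) (alg b) (th x y v) - th (alg y) (alg b) (th x a v)
          - th (alg x) (brg y a b) (beta v) + Dop th (alg y) (alg a) (th x b v) = 0) /\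
      (forall a b x y v,
          th (alg a) (alg b) (Dop th x y v) - Dop th (alg x) (alg y) (th a b v)
          + th (brg x y a) (alg b) (beta v) + th (alg a) (brg x y b) (beta v) = 0).

Definition HomLTS_action (G H : lmodType K) (brg : G -> G -> G -> G) (alg : G -> G)
    (brh : H -> H -> H -> H) (alh : H -> H) (th : G -> G -> H -> H) : Prop :=
  [/\ HomLTS_rep brg alg alh th,
      (forall x y u v w,
          th (alg x) (alg y) (brh u v w) =
          brh (th x y u) (alh v) (alh w) + brh (alh u) (th x y v) (alh w)
          + brh (alh u) (alh v) (th x y w)) &
      (forall x y u v w,
          th (alg x) (alg y) (brh u v w) = brh (alh u) (alh v) (th x y w) /\
          brh (alh u) (alh v) (th x y w) = 0)].

Definition bracketA (G H : lmodType K) (brh : H -> H -> H -> H)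
    (th : G -> G -> H -> H) (A : H -> G) (k : K) (u v w : H) : H :=
  Dop th (A u) (A v) w - th (A u) (A w) v + th (A v) (A w) u + k *: brh u v w.

Definition OOperator (G H : lmodType K) (brg : G -> G -> G -> G) (alg : G -> G)
    (brh : H -> H -> H -> H) (alh : H -> H) (th : G -> G -> H -> H)
    (k : K) (A : H -> G) : Prop :=
  [/\ lin A,
      (forall u, A (alh u) = alg (A u)) &
      (forall u v w, brg (A u) (A v) (A w) = A (bracketA brh th A k u v w))].

Definition thetaA (G H : lmodType K) (brg : G -> G -> G -> G)
    (th : G -> G -> H -> H) (A : H -> G) (u v : H) (x : G) : G :=
  brg x (A u) (A v) + A (th x (A v) u - Dop th x (A u) v).

Definition DA (G H : lmodType K) (brg : G -> G -> G -> G)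
    (th : G -> G -> H -> H) (A : H -> G) (u v : H) (x : G) : G :=
  thetaA brg th A v u x - thetaA brg th A u v x.

Definition ImAB (G H : lmodType K) (brg : G -> G -> G -> G)
    (th : G -> G -> H -> H) (A : H -> G) (alhinv : H -> H) (a b : G) (v : H) : G :=
  A (Dop th a b (alhinv v)) - brg a b (A (alhinv v)).

End HomLTS.

(* Main.v *)
Require Import Defs.
From mathcomp Require Import all_boot all_order all_algebra.
Import GRing.Theory.
Local Open Scope ring_scope.
Set Implicit Arguments. Unset Strict Implicit.

Lemma mvR (V : zmodType) (x R Res : V) : R = - x + Res -> x + R = Res.
Proof. by move=> ->; rewrite addrA addrN add0r. Qed.
Lemma useP (V : zmodType) (E G : V) : E = 0 -> G + E = 0 -> G = 0.
Proof. by move=> -> ; rewrite addr0. Qed.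
Lemma useN (V : zmodType) (E G : V) : E = 0 -> G - E = 0 -> G = 0.
Proof. by move=> -> ; rewrite subr0. Qed.

Ltac partner x := match x with - ?y => y | _ => constr:(- x) end.
Lemma fr_step (V : zmodType) (a p R R' : V) : R = p + R' -> a + R = p + (a + R').
Proof. by move=> ->; rewrite addrCA. Qed.
Lemma canc1 (V : zmodType) (x R R' Res : V) : R = - x + R' -> R' = Res -> x + R = Res.
Proof. by move=> -> <-; rewrite addNKr. Qed.
Lemma canc2 (V : zmodType) (y R R' Res : V) : R = y + R' -> R' = Res -> - y + R = Res.
Proof. by move=> -> <-; rewrite addKr. Qed.
Ltac find_front p :=
  lazymatch goal with
  | |- ?q + ?R0 = _ => first [ unify q p; reflexivity | eapply fr_step; find_front p ]
  end.
Ltac canc_step :=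
  lazymatch goal with
  | |- - ?y + ?R = ?Res =>
    first [ eapply canc2; [find_front y | ] | apply: mvR ]
  | |- ?x + ?R = ?Res =>
    first [ eapply canc1; [find_front (- x) | ] | apply: mvR ]
  end.
Ltac gen1 x := lazymatch x with
  | _ + _ => fail | - _ => fail | 0 => fail
  | _ => tryif is_var x then fail else (let y := fresh "t" in set y := x; clearbody y)
  end.
Ltac gen_atoms := repeat match goal with
  | |- context [?x + _] => gen1 x
  | |- context [_ + ?x] => gen1 x
  | |- context [- ?x] => gen1 x
  end.
Ltac canc := rewrite -[LHS]addr0 -?addrA; repeat canc_step.

Section L.
Variable K : fieldType.
Variables U V : lmodType K.
Variable f : U -> V.
Hypothesis hf : lin f.
Lemma lin0 : f 0 = 0.
Proof.
have h := hf 1 0 0; rewrite !scale1r addr0 in h.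
by apply: (addrI (f 0)); rewrite addr0 -h.
Qed.
Lemma linD u v : f (u + v) = f u + f v.
Proof. by have := hf 1 u v; rewrite !scale1r. Qed.
Lemma linZ c u : f (c *: u) = c *: f u.
Proof. by have := hf c u 0; rewrite !addr0 lin0 addr0. Qed.
Lemma linN u : f (- u) = - f u.
Proof. by rewrite -scaleN1r linZ scaleN1r. Qed.
End L.
Lemma eqs0 (V : zmodType) (x y : V) : x = y -> x - y = 0.
Proof. by move=> ->; rewrite subrr. Qed.

Theorem mainTheorem5 (K : fieldType) (charK0 : [pchar K] =i pred0)
    (G H : lmodType K)
    (brg : G -> G -> G -> G) (alg : G -> G)
    (brh : H -> H -> H -> H) (alh : H -> H) (alhinv : H -> H)
    (th : G -> G -> H -> H) (k : K) (A : H -> G) (a b : G) :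
  HomLTS brg alg -> bijective alg ->
  HomLTS brh alh -> cancel alh alhinv -> cancel alhinv alh ->
  HomLTS_action brg alg brh alh th ->
  OOperator brg alg brh alh th k A ->
  alg a = a -> alg b = b ->
  (forall v, alg (ImAB brg th A alhinv a b v) = ImAB brg th A alhinv a b (alh v)) /\
  (forall v1 v2 v3,
     thetaA brg th A v2 v3 (ImAB brg th A alhinv a b v1)
     - thetaA brg th A v1 v3 (ImAB brg th A alhinv a b v2)
     + DA brg th A v1 v2 (ImAB brg th A alhinv a b v3)
     - ImAB brg th A alhinv a b (bracketA brh th A k v1 v2 v3) = 0).
Proof.
move=> [[lg1 [lg2 lg3]] [lalg [algbr [skg [cycg fundg]]]]] _.
move=> [[lh1 [lh2 lh3]] [lalh [alhbr [skh [cych fundh]]]]] alhK alhinvK.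
move=> [[lth3 [lth1 [lth2 [thal [R1 R2]]]]] act2 actZ] [linA AO Obr] Ha Hb.
have AD := linD linA; have AN := linN linA; have AZ := linZ linA.
have algD := linD lalg; have algN := linN lalg; have algZ := linZ lalg.
have alhD := linD lalh; have alhN := linN lalh; have alhZ := linZ lalh.
have thD3 x y := linD (lth3 x y); have thN3 x y := linN (lth3 x y);
  have thZ3 x y := linZ (lth3 x y).
have thD1 : forall x x' y v, th (x + x') y v = th x y v + th x' y v.
  by move=> x x' y v; exact: (linD (lth1 y v)).
have thN1 : forall x y v, th (- x) y v = - th x y v.
  by move=> x y v; exact: (linN (lth1 y v)).
have thD2 : forall x y y' v, th x (y + y') v = th x y v + th x y' v.
  by move=> x y y' v; exact: (linD (lth2 x v)).
have thN2 : forall x y v, th x (- y) v = - th x y v.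
  by move=> x y v; exact: (linN (lth2 x v)).
have gD1 : forall x x' y z, brg (x + x') y z = brg x y z + brg x' y z.
  by move=> *; exact: (linD (lg1 _ _)).
have gN1 : forall x y z, brg (- x) y z = - brg x y z.
  by move=> *; exact: (linN (lg1 _ _)).
have gD2 : forall x y y' z, brg x (y + y') z = brg x y z + brg x y' z.
  by move=> *; exact: (linD (lg2 _ _)).
have gN2 : forall x y z, brg x (- y) z = - brg x y z.
  by move=> *; exact: (linN (lg2 _ _)).
have gD3 : forall x y z z', brg x y (z + z') = brg x y z + brg x y z'.
  by move=> *; exact: (linD (lg3 _ _)).
have gN3 : forall x y z, brg x y (- z) = - brg x y z.
  by move=> *; exact: (linN (lg3 _ _)).
have gZ3 : forall c x y z, brg x y (c *: z) = c *: brg x y z.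
  by move=> *; exact: (linZ (lg3 _ _)).
have hD1 : forall x x' y z, brh (x + x') y z = brh x y z + brh x' y z.
  by move=> *; exact: (linD (lh1 _ _)).
have hN1 : forall x y z, brh (- x) y z = - brh x y z.
  by move=> *; exact: (linN (lh1 _ _)).
have hD2 : forall x y y' z, brh x (y + y') z = brh x y z + brh x y' z.
  by move=> *; exact: (linD (lh2 _ _)).
have hN2 : forall x y z, brh x (- y) z = - brh x y z.
  by move=> *; exact: (linN (lh2 _ _)).
have hD3 : forall x y z z', brh x y (z + z') = brh x y z + brh x y z'.
  by move=> *; exact: (linD (lh3 _ _)).
have hN3 : forall x y z, brh x y (- z) = - brh x y z.
  by move=> *; exact: (linN (lh3 _ _)).
split.
  move=> v; rewrite -(alhinvK v); move: (alhinv v) => w.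
  rewrite /ImAB /Dop !alhK.
  rewrite algD algN -!AO algbr Ha Hb -AO alhD alhN -!thal Ha Hb.
  done.
move=> v1 v2 v3.
rewrite -(alhinvK v1) -(alhinvK v2) -(alhinvK v3).
move: (alhinv v1) (alhinv v2) (alhinv v3) => w1 w2 w3.
have Bal : bracketA brh th A k (alh w1) (alh w2) (alh w3)
         = alh (bracketA brh th A k w1 w2 w3).
  rewrite /bracketA /Dop !alhD !alhN alhZ !AO !thal alhbr.
  done.
rewrite Bal.
have A0 := lin0 linA.
have wA : forall t, t = 0 -> A t = 0 by move=> t ->.
have wkA : forall t, t = 0 -> k *: A t = 0 by move=> t ->; rewrite A0 scaler0.
set X1 := A w1; set X2 := A w2; set X3 := A w3.
set aX1 := A (alh w1); set aX2 := A (alh w2); set aX3 := A (alh w3).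
have F := eqs0 (fundg a b X1 X2 X3).
have S1 := skg (brg a b X2) aX1 aX3.
have C := cycg (brg a b X3) aX1 aX2.
have S2 := skg aX2 (brg a b X3) aX1.
have R21 := wA _ (R2 X2 X3 a b w1).
have R22 := wA _ (R2 X1 X3 a b w2).
have R221 := wA _ (R2 X2 X1 a b w3).
have R212 := wA _ (R2 X1 X2 a b w3).
have Actba := wkA _ (eqs0 (act2 b a w1 w2 w3)).
have Actab := wkA _ (eqs0 (act2 a b w1 w2 w3)).
have Sk2ba := wkA _ (skh (th b a w2) (alh w1) (alh w3)).
have Sk2ab := wkA _ (skh (th a b w2) (alh w1) (alh w3)).
have Sk3ba := wkA _ (skh (alh w2) (th b a w3) (alh w1)).
have Sk3ab := wkA _ (skh (alh w2) (th a b w3) (alh w1)).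
have Cy3ba := wkA _ (cych (th b a w3) (alh w1) (alh w2)).
have Cy3ab := wkA _ (cych (th a b w3) (alh w1) (alh w2)).
apply: (useN F); apply: (useN S1); apply: (useN C); apply: (useP S2).
apply: (useN R21); apply: (useP R22); apply: (useN R221); apply: (useP R212).
apply: (useP Actba); apply: (useP Sk2ba); apply: (useN Sk3ba); apply: (useP Cy3ba).
apply: (useN Actab); apply: (useN Sk2ab); apply: (useP Sk3ab); apply: (useN Cy3ab).
rewrite /X1 /X2 /X3 /aX1 /aX2 /aX3.
rewrite /ImAB /DA /thetaA /bracketA /Dop ?alhK; do 6 (rewrite ?opprD ?opprK ?AD ?AN ?AZ ?algD ?algN ?thD1 ?thN1 ?thD2 ?thN2 ?thD3 ?thN3 ?thZ3 ?gD1 ?gN1 ?gD2 ?gN2 ?gD3 ?gN3 ?gZ3 ?hD1 ?hN1 ?hD2 ?hN2 ?hD3 ?hN3 ?scalerDr ?scalerN ?Ha ?Hb -?AO ?Obr /bracketA /Dop).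
gen_atoms.
canc.
by [].
Qed.
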